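(* Let $k$ be a field of characteristic $p>2$ ($p$ prime). Let $m\ge1$ and $\alpha_1,\ldots,\alpha_{2m}\in k$. Then $$w_m(x_1+\alpha_1,x_2+\alpha_2,\ldots,x_{2m}+\alpha_{2m})\equiv w_m\pmod{S^2+T^{(3)}}.$$
   Context: $X=\{x_i\mid i\ge0\}$ countably infinite; $k_1\langle X\rangle$ the free unitary associative $k$-algebra on $X$. $[a,b]=ab-ba$, $[a,b,c]=[[a,b],c]$. A $T$-space is a subspace invariant under all endomorphisms of $k_1\langle X\rangle$, a $T$-ideal is a $T$-space that is an ideal. $T^{(3)}$ is the $T$-ideal generated by $[x_1,x_2,x_3]$, $S^2$ the $T$-space generated by $[x_1,x_2]$. $\kappa(u,v)=[u,v]u^{p-1}v^{p-1}$, $w_m=\prod_{r=1}^m\kappa(x_{2r-1},x_{2r})$, and $w_m(u_1,\ldots,u_{2m})$ is the image of $w_m$ under $x_j\mapsto u_j$. *)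

(* Defs.v *)
(* The free unital associative algebra k_1<X> on the
   countable set X = {x_i | i >= 0} is the monoid algebra of the free monoid
   on nat:  {malg k[{fmonom nat}]}  (multinomials' monalg). *)
From HB Require Import structures.
From mathcomp Require Import all_boot all_order all_algebra.
From mathcomp.multinomials Require Export monalg.
Set Implicit Arguments.
Unset Strict Implicit.
Unset Printing Implicit Defensive.
Import Order.TTheory GRing.Theory Num.Theory.
Local Open Scope ring_scope.

Definition freealg (k : fieldType) := {malg k[{fmonom nat}]}.

Definition xvar (k : fieldType) (i : nat) : freealg k := << fmu i >>.

Definition comm (R : pzRingType) (a b : R) : R := a * b - b * a.
Definition comm3 (R : pzRingType) (a b c : R) : R := comm (comm a b) c.

Definition is_subspace (k : fieldType) (V : freealg k -> Prop) : Prop :=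
  V 0 /\ (forall (a : k) (u v : freealg k), V u -> V v -> V (a *: u + v)).

Definition is_Tspace (k : fieldType) (V : freealg k -> Prop) : Prop :=
  is_subspace V /\
  (forall (phi : {lrmorphism freealg k -> freealg k}) (f : freealg k),
      V f -> V (phi f)).

Definition is_Tideal (k : fieldType) (V : freealg k -> Prop) : Prop :=
  is_Tspace V /\ (forall a f b : freealg k, V f -> V (a * f * b)).

Definition Tspace_gen (k : fieldType) (G : freealg k -> Prop)
  (f : freealg k) : Prop :=
  forall V : freealg k -> Prop, is_Tspace V -> (forall g, G g -> V g) -> V f.

Definition Tideal_gen (k : fieldType) (G : freealg k -> Prop)
  (f : freealg k) : Prop :=
  forall V : freealg k -> Prop, is_Tideal V -> (forall g, G g -> V g) -> V f.

Definition S2 (k : fieldType) : freealg k -> Prop :=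
  Tspace_gen (fun g => g = comm (xvar k 1) (xvar k 2)).

Definition T3 (k : fieldType) : freealg k -> Prop :=
  Tideal_gen (fun g => g = comm3 (xvar k 1) (xvar k 2) (xvar k 3)).

Definition sum_sp (k : fieldType) (U V : freealg k -> Prop)
  (f : freealg k) : Prop :=
  exists u v, U u /\ V v /\ f = u + v.

Definition kappa (R : pzRingType) (p : nat) (u v : R) : R :=
  comm u v * u ^+ p.-1 * v ^+ p.-1.

Definition w (R : pzRingType) (p m : nat) (u : nat -> R) : R :=
  \prod_(1 <= r < m.+1) kappa p (u (2 * r).-1) (u (2 * r)).

(* Main.v *)
Require Import Defs.
From HB Require Import structures.
From mathcomp Require Import all_boot all_order all_algebra.
From mathcomp.multinomials Require Import monalg.
Import GRing.Theory.
Local Open Scope ring_scope.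
Set Implicit Arguments.
Unset Strict Implicit.

Section Subst.
Variable k : fieldType.
Local Notation A := (freealg k).

Lemma malgC_comm (c : k) (g : A) : g * c%:MP = c%:MP * g.
Proof.
rewrite !malgM_def fgmulgU fgmulUg; apply: eq_bigr => m _.
by rewrite mulrC mulm1 mul1m.
Qed.

Lemma scal_commr (c : k) (x y : A) : x * (c *: y) = c *: (x * y).
Proof. by rewrite -!mul_malgC mulrA malgC_comm mulrA. Qed.

Variable s : nat -> A.
Definition hmap (m : fmonom nat) : A := \prod_(i <- (m : seq nat)) s i.

Lemma hmap_mm : mmorphism hmap.
Proof.
split; last by rewrite /hmap fm1 big_nil.
by move=> m1 m2; rewrite /hmap fmM big_cat.
Qed.

HB.instance Definition _ := isMultiplicative.Build (fmonom nat) A hmap hmap_mm.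

Definition substf (g : A) : A := mmap (@malgC (fmonom nat) k) hmap g.

Lemma substf_mult : multiplicative substf.
Proof.
apply: commr_mmap_is_multiplicative => g m m'.
by rewrite /GRing.comm malgC_comm.
Qed.

HB.instance Definition _ := GRing.isAdditive.Build A A substf
  (@mmap_is_additive _ _ _ (@malgC (fmonom nat) k) hmap).
HB.instance Definition _ := GRing.isMultiplicative.Build A A substf substf_mult.

Lemma substf_scale : scalable substf.
Proof.
move=> c g; rewrite /substf /= (@mmapZ _ _ _ (@malgC (fmonom nat) k) hmap).
by rewrite mul_malgC.
Qed.

HB.instance Definition _ := GRing.isScalable.Build k A A *:%R substf substf_scale.

Definition substm : {lrmorphism A -> A} := substf.

Lemma substm_x i : substm (xvar k i) = s i.
Proof.
rewrite /= /substf /xvar mmapU /= /hmap fmU big_seq1.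
by rewrite mpolyC1E mul1r.
Qed.
End Subst.

Section Closure.
Variable k : fieldType.
Local Notation A := (freealg k).

Lemma comm_morph (phi : {lrmorphism A -> A}) (a b : A) :
  phi (comm a b) = comm (phi a) (phi b).
Proof. by rewrite /comm rmorphB !rmorphM. Qed.

Definition s3 (a b c : A) (j : nat) : A :=
  if j == 1%N then a else if j == 2%N then b else c.

Lemma T3_gen (a b c : A) : T3 (comm3 a b c).
Proof.
move=> V [[_ Vphi] _] Vg.
have := Vphi (@substm k (s3 a b c)) _ (Vg _ erefl).
by rewrite /comm3 !comm_morph !substm_x.
Qed.

Lemma S2_gen (a b : A) : S2 (comm a b).
Proof.
move=> V [_ Vphi] Vg.
have := Vphi (@substm k (s3 a b b)) _ (Vg _ erefl).
by rewrite !comm_morph !substm_x.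
Qed.

Lemma T3_0 : T3 (0 : A).
Proof. by move=> V [[[V0 _] _] _]. Qed.
Lemma T3_lin (c : k) (f g : A) : T3 f -> T3 g -> T3 (c *: f + g).
Proof.
move=> Tf Tg V HV Vg; have [[[_ VZ] _] _] := HV.
exact: VZ (Tf V HV Vg) (Tg V HV Vg).
Qed.
Lemma T3_mul (a f b : A) : T3 f -> T3 (a * f * b).
Proof. move=> Tf V HV Vg; have [_ Vm] := HV; exact: Vm (Tf V HV Vg). Qed.

Lemma S2_0 : S2 (0 : A).
Proof. by move=> V [[V0 _] _]. Qed.
Lemma S2_lin (c : k) (f g : A) : S2 f -> S2 g -> S2 (c *: f + g).
Proof.
move=> Tf Tg V HV Vg; have [[_ VZ] _] := HV.
exact: VZ (Tf V HV Vg) (Tg V HV Vg).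
Qed.

Lemma T3_add (f g : A) : T3 f -> T3 g -> T3 (f + g).
Proof. by move=> ? ?; rewrite -[f]scale1r; apply: T3_lin. Qed.
Lemma T3_scale (c : k) (f : A) : T3 f -> T3 (c *: f).
Proof. by move=> ?; rewrite -[_ *: f]addr0; apply: T3_lin => //; apply: T3_0. Qed.
Lemma T3_opp (f : A) : T3 f -> T3 (- f).
Proof. by move=> ?; rewrite -scaleN1r; apply: T3_scale. Qed.
Lemma T3_sub (f g : A) : T3 f -> T3 g -> T3 (f - g).
Proof. by move=> ? ?; apply: T3_add => //; apply: T3_opp. Qed.
Lemma T3_mull (a f : A) : T3 f -> T3 (a * f).
Proof. by move=> ?; rewrite -[a * f]mulr1; apply: T3_mul. Qed.
Lemma T3_mulr (f b : A) : T3 f -> T3 (f * b).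
Proof. by move=> ?; rewrite -[f]mul1r; apply: T3_mul. Qed.
Lemma T3_muln (f : A) n : T3 f -> T3 (f *+ n).
Proof. move=> ?; elim: n => [|n IH]; first by rewrite mulr0n; apply: T3_0.
by rewrite mulrS; apply: T3_add. Qed.

Definition W := sum_sp (@S2 k) (@T3 k).

Lemma W_0 : W (0 : A).
Proof. by exists 0, 0; rewrite addr0; split; [apply: S2_0|split; [apply: T3_0|]]. Qed.
Lemma W_add (f g : A) : W f -> W g -> W (f + g).
Proof.
move=> [u1 [v1 [S1 [T1 ->]]]] [u2 [v2 [S2' [T2 ->]]]].
exists (u1 + u2), (v1 + v2); split; last split.
- by rewrite -[u1]scale1r; apply: S2_lin.
- exact: T3_add.
- by rewrite addrACA.
Qed.
Lemma W_scale (c : k) (f : A) : W f -> W (c *: f).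
Proof.
move=> [u1 [v1 [S1 [T1 ->]]]]; exists (c *: u1), (c *: v1); split; last split.
- by rewrite -[_ *: u1]addr0; apply: S2_lin => //; apply: S2_0.
- exact: T3_scale.
- by rewrite scalerDr.
Qed.
Lemma W_muln (f : A) n : W f -> W (f *+ n).
Proof. move=> ?; elim: n => [|n IH]; first by rewrite mulr0n; apply: W_0.
by rewrite mulrS; apply: W_add. Qed.
Lemma W_T3 (f : A) : T3 f -> W f.
Proof. by move=> Tf; exists 0, f; rewrite add0r; split; [apply: S2_0|]. Qed.
Lemma W_comm (a b : A) : W (comm a b).
Proof. by exists (comm a b), 0; rewrite addr0; split; [apply: S2_gen|split; [apply: T3_0|]]. Qed.

End Closure.

Section CommR.
Variable R : pzRingType.
Implicit Types a b c : R.
Lemma commMl a b c : comm (a*b) c = a * comm b c + comm a c * b.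
Proof. by rewrite /comm mulrBr mulrBl !mulrA addrA subrK. Qed.
Lemma commMr a b c : comm a (b*c) = comm a b * c + b * comm a c.
Proof. by rewrite /comm mulrBr mulrBl !mulrA addrA subrK. Qed.
Lemma commN a b : comm a b = - comm b a.
Proof. by rewrite /comm opprB. Qed.
Lemma commDl a b c : comm (a + b) c = comm a c + comm b c.
Proof. by rewrite /comm mulrDl mulrDr opprD addrACA. Qed.
Lemma commDr a b c : comm a (b + c) = comm a b + comm a c.
Proof. by rewrite /comm mulrDl mulrDr opprD addrACA. Qed.
Lemma key_id (x y z : R) : comm x y * comm x z *+ 2 =
   comm (comm x y) x * z + y * comm (comm x z) x - comm (comm x (y * z)) x.
Proof.
  rewrite commMr (commDl (comm x y * z)) (commMl (comm x y) z x) (commMl y (comm x z) x) (commN z x) (commN y x) mulrN mulNr.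
  move: (comm x y * comm x z) (comm (comm x y) x * z) (y * comm (comm x z) x) => P a b.
  rewrite opprD opprB opprD opprK mulr2n.
  by rewrite addrACA (addrC a) (addrC b) !subrK.
Qed.
Lemma comm0 a b : GRing.comm a b -> comm a b = 0.
Proof. by rewrite /comm => ->; rewrite subrr. Qed.
End CommR.

Section Gen2.
Variable R : pzRingType.
Lemma pow_step (x y : R) n :
  comm (x ^+ n.+2) y - comm x y * x ^+ n.+1 *+ n.+2 =
  comm (x ^+ n.+1) (comm x y) + (comm (x ^+ n.+1) y - comm x y * x ^+ n *+ n.+1) * x.
Proof.
rewrite [x ^+ n.+2]exprSr (commMl (x ^+ n.+1) x y) mulrBl mulrnAl -mulrA -exprSr.
move: (comm x y) (x ^+ n.+1) => c X.
rewrite {2}/comm mulrSr opprD !addrA.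
set s := comm X y * x.
by rewrite [X * c - c * X + s]addrAC addrAC.
Qed.
End Gen2.
Section Gen3.
Variable R : pzRingType.
Lemma H_id (c f g y : R) :
  c * comm (f * g) y = f * (c * comm g y) + comm c f * comm g y + c * comm f y * g.
Proof.
rewrite (commMl f g y) mulrDr !mulrA; congr (_ + _).
by rewrite -mulrDl; congr (_ * _); rewrite /comm addrC subrK.
Qed.

Lemma case1_id (L X Wp Rr v D : R) : comm Wp v = 0 ->
  comm (L * (X * Wp) * Rr) v - L * (D * Wp) * Rr =
  L * (X * Wp) * comm Rr v + comm L v * (X * Wp) * Rr + L * ((comm X v - D) * Wp) * Rr.
Proof.
move=> h.
rewrite (commMl (L * (X * Wp)) Rr v) (commMl L (X * Wp) v) (commMl X Wp v) h mulr0 add0r.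
move: (comm Rr v) (comm L v) (comm X v) => a b d.
rewrite mulrDl mulrBl mulrBr mulrBl !addrA; congr (_ + _).
by rewrite addrAC.
Qed.

Lemma case2_id (u L Wp Y Rr c E : R) : comm u Wp = 0 ->
  comm u (L * (Wp * Y) * Rr) - L * (c * Wp * E) * Rr =
  comm u L * (Wp * Y) * Rr + L * (Wp * Y) * comm u Rr + L * (Wp * (comm u Y - c * E)) * Rr
  + L * (comm Wp c * E) * Rr.
Proof.
move=> h.
rewrite (commMr u (L * (Wp * Y)) Rr) (commMr u L (Wp * Y)) (commMr u Wp Y) h mul0r add0r.
have -> : comm Wp c = Wp * c - c * Wp by [].
move: (comm u L) (comm u Rr) (comm u Y) => a b d.
rewrite mulrDl !mulrBr !mulrBl !mulrBr !mulrBl !mulrA.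
move: (a * Wp * Y * Rr) (L * Wp * d * Rr) (L * Wp * Y * b) (L * c * Wp * E * Rr)
  (L * Wp * c * E * Rr) => t1 t2 t3 t4 t5.
rewrite !addrA subrK; congr (_ + _).
by rewrite addrAC.
Qed.
End Gen3.
Section Main.
Variable k : fieldType.
Local Notation A := (freealg k).
Variable p : nat.
Hypothesis hp : p \in [pchar k].
Hypothesis hp2 : (2 < p)%N.

Lemma natr_neq0 n : (0 < n < p)%N -> (n%:R : k) != 0.
Proof.
move=> /andP [n0 np]; rewrite -(dvdn_pcharf hp).
by apply/negP => /(dvdn_leq n0); rewrite leqNgt np.
Qed.

Lemma T3_unscale (f : A) n : (0 < n < p)%N -> T3 (f *+ n) -> T3 f.
Proof.
move=> hn Tf; have := T3_scale (n%:R^-1) Tf.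
by rewrite -scaler_nat scalerA mulVf ?natr_neq0 // scale1r.
Qed.

Lemma W_unscale (f X : A) n : (0 < n < p)%N -> W X -> T3 (X - f *+ n) -> W f.
Proof.
move=> hn WX T.
have -> : f = n%:R^-1 *: X + (- n%:R^-1) *: (X - f *+ n).
  rewrite scaleNr scalerBr opprB addrC subrK -scaler_nat scalerA mulVf ?scale1r //.
  exact: natr_neq0.
apply: W_add; first exact: W_scale.
by apply: W_T3; apply: T3_scale.
Qed.

Lemma T3_key (x y z : A) : T3 (comm x y * comm x z).
Proof.
apply: (T3_unscale (n := 2)) => //.
rewrite key_id; apply: T3_sub; first apply: T3_add.
- by apply: T3_mulr; exact: T3_gen.
- by apply: T3_mull; exact: T3_gen.
- exact: T3_gen.
Qed.

Lemma T3_c (a b c : A) : T3 (comm (comm a b) c).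
Proof. exact: T3_gen. Qed.

Lemma T3_pow (x y : A) n : T3 (comm (x ^+ n.+1) y - comm x y * x ^+ n *+ n.+1).
Proof.
elim: n => [|n IH]; first by rewrite expr1 expr0 mulr1 mulr1n subrr; apply: T3_0.
rewrite pow_step; apply: T3_add; last exact: T3_mulr.
by rewrite commN; apply: T3_opp; apply: T3_c.
Qed.

Lemma T3_powr (x y : A) n : T3 (comm y (x ^+ n.+1) - comm y x * x ^+ n *+ n.+1).
Proof.
have -> : comm y (x ^+ n.+1) - comm y x * x ^+ n *+ n.+1 =
  - (comm (x ^+ n.+1) y - comm x y * x ^+ n *+ n.+1).
  by rewrite opprB (commN y) (commN y x) mulNr mulNrn opprK addrC.
by apply: T3_opp; apply: T3_pow.
Qed.

Definition Zc (f : A) := forall y, T3 (comm f y).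
Definition Hc (u v h : A) := forall y, T3 (comm u v * comm h y).

Lemma Zc_mul f g : Zc f -> Zc g -> Zc (f * g).
Proof.
move=> hf hg y; rewrite commMl; apply: T3_add; [exact: T3_mull | exact: T3_mulr].
Qed.
Lemma Zc_central f : (forall y, GRing.comm f y) -> Zc f.
Proof. by move=> h y; rewrite (comm0 (h y)); apply: T3_0. Qed.
Lemma Zc_1 : Zc 1.
Proof. by apply: Zc_central => y; apply: commr_sym; apply: commr1. Qed.

Lemma Hc_mul u v f g : Hc u v f -> Hc u v g -> Hc u v (f * g).
Proof.
move=> hf hg y; rewrite H_id; apply: T3_add; first apply: T3_add.
- exact: T3_mull.
- by apply: T3_mulr; apply: T3_c.
- exact: T3_mulr.
Qed.
Lemma Hc_add u v f g : Hc u v f -> Hc u v g -> Hc u v (f + g).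
Proof. by move=> hf hg y; rewrite commDl mulrDr; apply: T3_add. Qed.
Lemma Hc_central u v f : (forall y, GRing.comm f y) -> Hc u v f.
Proof. by move=> h y; rewrite (comm0 (h y)) mulr0; apply: T3_0. Qed.
Lemma Hc_u u v : Hc u v u.
Proof. move=> y; exact: T3_key. Qed.
Lemma Hc_v u v : Hc u v v.
Proof. by move=> y; rewrite commN mulNr; apply: T3_opp; apply: T3_key. Qed.
Lemma Hc_exp u v f n : Hc u v f -> Hc u v (f ^+ n).
Proof.
move=> hf; elim: n => [|n IH]; last by rewrite exprS; apply: Hc_mul.
by rewrite expr0; apply: Hc_central => y; apply: commr_sym; apply: commr1.
Qed.
Lemma cZ u v h : Hc u v h -> Zc (comm u v * h).
Proof.
move=> hh y; rewrite commMl; apply: T3_add; first exact: hh.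
by apply: T3_mulr; apply: T3_c.
Qed.

Lemma scal_comm (a : k) (y : A) : GRing.comm (a%:A) y.
Proof. by rewrite /GRing.comm mulr_algl scal_commr mulr1. Qed.

Lemma W_case1 (L Rr u v Wp : A) a : Zc L -> Zc Rr -> GRing.comm Wp v -> (a.+1 < p)%N ->
  W (L * (comm u v * u ^+ a * Wp) * Rr).
Proof.
move=> hL hR hW ha.
apply: (W_unscale (n := a.+1) (X := comm (L * (u ^+ a.+1 * Wp) * Rr) v)).
- exact: ha.
- exact: W_comm.
have h0 := comm0 hW.
rewrite -mulrnAl -mulrnAr -mulrnAl case1_id; last exact: h0.
apply: T3_add; first apply: T3_add.
- exact: T3_mull.
- by apply: T3_mulr; apply: T3_mulr.
- by apply: T3_mulr; apply: T3_mull; apply: T3_mulr; apply: T3_pow.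
Qed.

Lemma W_case2 (L Rr u v Wp : A) b : Zc L -> Zc Rr -> GRing.comm u Wp -> (b.+1 < p)%N ->
  W (L * (comm u v * Wp * v ^+ b) * Rr).
Proof.
move=> hL hR hW hb.
apply: (W_unscale (n := b.+1) (X := comm u (L * (Wp * v ^+ b.+1) * Rr))).
- exact: hb.
- exact: W_comm.
have h0 := comm0 hW.
rewrite -mulrnAl -mulrnAr -mulrnAr case2_id; last exact: h0.
apply: T3_add; first apply: T3_add; first apply: T3_add.
- by apply: T3_mulr; apply: T3_mulr; rewrite commN; apply: T3_opp.
- by apply: T3_mull; rewrite commN; apply: T3_opp.
- by apply: T3_mulr; apply: T3_mull; apply: T3_mull; rewrite mulrnAr; apply: T3_powr.
- by apply: T3_mulr; apply: T3_mull; apply: T3_mulr; rewrite commN; apply: T3_opp; apply: T3_c.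
Qed.
End Main.

Section Gen4.
Variable R : pzRingType.
Lemma gen_a (c X x Y y : R) : c*X*Y - c*x*y = c*(X - x)*Y + c*x*(Y - y).
Proof. by rewrite !mulrBr mulrBl addrA subrK. Qed.
Lemma gen_b (L PF PG F G Rr : R) :
  L*(PF*F - PG*G)*Rr = L*(PF - PG)*(G*Rr) + L*PF*(F - G)*Rr.
Proof.
have -> : PF*F - PG*G = (PF - PG)*G + PF*(F - G)
  by rewrite mulrBl mulrBr [RHS]addrC addrA subrK.
by rewrite mulrDr mulrDl !mulrA.
Qed.
Lemma gen_sum1 (L c V Rr : R) (I : Type) (r : seq I) (P : pred I) (F : I -> R) :
  L*(c*(\sum_(i <- r | P i) F i)*V)*Rr = \sum_(i <- r | P i) L*(c*F i*V)*Rr.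
Proof. by rewrite mulr_sumr mulr_suml mulr_sumr mulr_suml. Qed.
Lemma gen_sum2 (L c x Rr : R) (I : Type) (r : seq I) (P : pred I) (F : I -> R) :
  L*(c*x*(\sum_(i <- r | P i) F i))*Rr = \sum_(i <- r | P i) L*(c*x*F i)*Rr.
Proof. by rewrite mulr_sumr mulr_sumr mulr_suml. Qed.
Lemma gen_n1 (L c t V Rr : R) m : L*(c*(t*+m)*V)*Rr = (L*(c*t*V)*Rr)*+m.
Proof. by rewrite mulrnAr mulrnAl mulrnAr mulrnAl. Qed.
Lemma gen_n2 (L c x t Rr : R) m : L*(c*x*(t*+m))*Rr = (L*(c*x*t)*Rr)*+m.
Proof. by rewrite mulrnAr mulrnAr mulrnAl. Qed.
Lemma gen_r2 (L c x Y V Rr : R) : L * (c * (x * Y) * V) * Rr = L * (c * x * (Y * V)) * Rr.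
Proof. by rewrite !mulrA. Qed.
Lemma gen_r3 (L c X Y y Rr : R) : L * (c * X * (Y * y)) * Rr = L * (c * (X * Y) * y) * Rr.
Proof. by rewrite !mulrA. Qed.
End Gen4.

Section Fin.
Variable k : fieldType.
Local Notation A := (freealg k).
Variable p : nat.
Hypothesis hp : p \in [pchar k].
Hypothesis hp2 : (2 < p)%N.

Lemma comm_shift (u v : A) (a b : k) : comm (u + a%:A) (v + b%:A) = comm u v.
Proof.
rewrite commDl !commDr (comm0 (scal_comm a v)) (comm0 (scal_comm a b%:A)).
by rewrite (comm0 (commr_sym (scal_comm b u))) !addr0.
Qed.

Lemma kappa_Z (u v : A) : Zc (kappa p u v).
Proof.
rewrite /kappa -mulrA; apply: cZ; apply: Hc_mul; apply: Hc_exp.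
- exact: (Hc_u hp hp2).
- exact: (Hc_v hp hp2).
Qed.

Lemma kappa_Z' (u v : A) a b : Zc (kappa p (u + a%:A) (v + b%:A)).
Proof.
rewrite /kappa comm_shift -mulrA; apply: cZ; apply: Hc_mul; apply: Hc_exp;
  apply: Hc_add.
- exact: (Hc_u hp hp2).
- by apply: Hc_central => y; exact: (scal_comm a y).
- exact: (Hc_v hp hp2).
- by apply: Hc_central => y; exact: (scal_comm b y).
Qed.

Lemma W_sum (I : Type) (r : seq I) (P : pred I) (F : I -> A) :
  (forall i, P i -> W (F i)) -> W (\sum_(i <- r | P i) F i).
Proof. by move=> h; apply: big_ind => //; [apply: W_0 | apply: W_add]. Qed.

Lemma binom_low (u : A) (a : k) n :
  (u + a%:A) ^+ n - u ^+ n = \sum_(i < n) (a%:A ^+ (n - i) * u ^+ i) *+ 'C(n, i).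
Proof.
rewrite [u + _]addrC exprDn_comm; last exact: (scal_comm a u).
by rewrite big_ord_recr /= subnn expr0 mul1r binn mulr1n addrK.
Qed.

Lemma base (L Rr u v : A) (a b : k) : Zc L -> Zc Rr ->
  W (L * (kappa p (u + a%:A) (v + b%:A) - kappa p u v) * Rr).
Proof.
move=> hL hR.
have hp0 : (0 < p)%N by apply: ltn_trans hp2.
rewrite /kappa comm_shift gen_a mulrDr mulrDl.
apply: W_add.
- rewrite binom_low gen_sum1.
  apply: W_sum => i _.
  rewrite gen_n1; apply: W_muln.
  have hc : GRing.comm (a%:A ^+ (p.-1 - i)) (u ^+ i).
    apply: commrX; apply: commr_sym; apply: commrX; apply: commr_sym; exact: (scal_comm a u).
  rewrite hc.
  rewrite gen_r2.
  have h1 : GRing.comm (a%:A ^+ (p.-1 - i) * (v + b%:A) ^+ p.-1) v.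
    apply: commr_sym; apply: commrM.
      apply: commrX; apply: commr_sym; exact: (scal_comm a v).
    apply: commrX; apply: commrD; first exact: commr_refl.
    apply: commr_sym; exact: (scal_comm b v).
  have h2 : (i.+1 < p)%N by move: (ltn_ord i); rewrite -ltnS prednK.
  exact (W_case1 hp u hL hR h1 h2).
- rewrite binom_low gen_sum2.
  apply: W_sum => i _.
  rewrite gen_n2; apply: W_muln.
  rewrite gen_r3.
  have h1 : GRing.comm u (u ^+ p.-1 * b%:A ^+ (p.-1 - i)).
    apply: commrM; first exact: commrX (commr_refl u).
    apply: commrX; apply: commr_sym; exact: (scal_comm b u).
  have h2 : (i.+1 < p)%N by move: (ltn_ord i); rewrite -ltnS prednK.
  exact (W_case2 hp v hL hR h1 h2).
Qed.

Lemma Zc_prod (F : nat -> A) n : (forall r, Zc (F r)) -> Zc (\prod_(1 <= r < n) F r).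
Proof.
move=> hF. apply: big_ind. exact: Zc_1. exact: Zc_mul. by move=> r _; apply: hF.
Qed.

Lemma main_gen (F G : nat -> A) : (forall r, Zc (F r)) -> (forall r, Zc (G r)) ->
  (forall r L Rr, Zc L -> Zc Rr -> W (L * (F r - G r) * Rr)) ->
  forall n L Rr, Zc L -> Zc Rr ->
  W (L * (\prod_(1 <= r < n.+1) F r - \prod_(1 <= r < n.+1) G r) * Rr).
Proof.
move=> hF hG hFG; elim=> [|n IH] L Rr hL hR.
  rewrite big_geq; last exact: leqnn. rewrite big_geq; last exact: leqnn. rewrite subrr mulr0 mul0r; apply: W_0.
rewrite (big_nat_recr n.+1 1 F). 2: done.
rewrite (big_nat_recr n.+1 1 G). 2: done.
rewrite gen_b.
apply: W_add.
- apply: IH. exact: hL. apply: Zc_mul. exact: hG. exact: hR.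
- apply: hFG. apply: Zc_mul. exact: hL. exact: Zc_prod. exact: hR.
Qed.
End Fin.

Unset Implicit Arguments.

Theorem lemma3p1 (k : fieldType) (p : nat) (hp : p \in [pchar k])
  (hp2 : (2 < p)%N) (m : nat) (hm : (1 <= m)%N) (alpha : nat -> k) :
  sum_sp (@S2 k) (@T3 k)
    (w p m (fun j => xvar k j + (alpha j)%:A) - w p m (xvar k)).
Proof.
have H := @main_gen k
  (fun r => kappa p (xvar k (2 * r).-1 + (alpha (2 * r).-1)%:A) (xvar k (2 * r) + (alpha (2 * r))%:A))
  (fun r => kappa p (xvar k (2 * r).-1) (xvar k (2 * r)))
  (fun r => kappa_Z' hp hp2 _ _ _ _) (fun r => kappa_Z hp hp2 _ _)
  (fun r L Rr hL hR => base hp hp2 _ _ _ _ hL hR) m 1 1 (@Zc_1 k) (@Zc_1 k).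
rewrite mul1r mulr1 in H.
exact H.
Qed.
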